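(* For integers $k>n\ge0$ and real $u\ge k$, $$I_{k,n}(u):=\int_k^u P_{k-n-1}(x-n-1)\,\frac{F_n(x)\,dx}{x-n}=\sum_{j=0}^{n}(-1)^{n-j}\,P_{k-j}(u-j)\,F_j(u).$$
   Context: The functions $P_k$ are defined by $P_0(u)=1$ for $u\ge 0$, and for integers $k\ge1$, $P_k:[k,\infty)\to\mathbb{R}$ is the function with $P_k(k)=0$ and $uP_k'(u)=P_{k-1}(u-1)$ for $u\ge k$. The auxiliary functions $F_k$ are defined by $F_0(u)=1$ for $u\ge0$, and for integers $k\ge1$, $F_k:[k,\infty)\to\mathbb{R}$ is the function with $F_k(k)=0$ and $(u-k+1)F_k'(u)=F_{k-1}(u)$ for $u\ge k$, i.e. $F_k(u)=\int_k^u F_{k-1}(x)\,\frac{dx}{x-k+1}$ (so $F_1(u)=\log u$). *)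

(* Defs.v *)
From Stdlib Require Import Reals Lra Lia.
From Coquelicot Require Import Coquelicot.
Open Scope R_scope.

(* P_0(u) = 1; for k >= 1, P_k(u) = int_k^u P_{k-1}(t-1) dt / t,
   i.e. the solution of u P_k'(u) = P_{k-1}(u-1) with P_k(k) = 0.
   (Values outside the domain [k, oo) are irrelevant.) *)
Fixpoint P (k : nat) : R -> R :=
  match k with
  | O => fun _ => 1
  | S k' => fun u => RInt (fun t => P k' (t - 1) / t) (INR (S k')) u
  end.

Fixpoint F (k : nat) : R -> R :=
  match k with
  | O => fun _ => 1
  | S k' => fun u => RInt (fun x => F k' x / (x - INR k')) (INR (S k')) u
  end.

(* Main.v *)
Require Import Defs.
From Stdlib Require Import Reals Lra Lia.
From Coquelicot Require Import Coquelicot.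
Open Scope R_scope.

Lemma deriv_RInt (g : R -> R) (c a x : R) : c < a -> c < x ->
  (forall t, c < t -> continuous g t) -> is_derive (fun u => RInt g a u) x (g x).
Proof.
  intros Ha Hx Hg. apply is_derive_RInt with a; [|apply Hg; lra].
  assert (He: 0 < x - c) by lra. exists (mkposreal _ He). intros y Hy.
  apply RInt_correct. apply ex_RInt_continuous. intros z Hz. apply Hg.
  unfold ball in Hy; simpl in Hy; unfold AbsRing_ball, abs, minus, plus, opp in Hy; simpl in Hy.
  apply Rabs_lt_between' in Hy.
  assert (c < Rmin a y) by (apply Rmin_glb_lt; lra). lra.
Qed.

Lemma cont_div (f : R -> R) (x : R) : continuous f x -> x <> 0 ->
  continuous (fun t => f t / t) x.
Proof.
  intros Hf Hx.
  apply (continuous_mult f (fun t => / t)); auto.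
  apply continuous_Rinv; auto.
Qed.

Lemma P_der_of_cont k : (forall x, INR k - 1 < x -> continuous (P k) x) ->
  forall x, INR k < x -> is_derive (P (S k)) x (P k (x - 1) / x).
Proof.
  intros Hc x Hx.
  change (P (S k)) with (fun u => RInt (fun t => P k (t - 1) / t) (INR (S k)) u).
  first [apply (deriv_RInt (fun t => P k (t - 1) / t) (INR k)) | apply (deriv_RInt (fun t => F k t / (t - INR k)) (INR k))]; auto.
  - rewrite S_INR; lra.
  - intros t Ht. apply cont_div.
    + apply (continuous_comp (fun t => t - 1) (P k)).
      * apply (continuous_minus (fun t => t) (fun _ => 1)).
        apply continuous_id. apply continuous_const.
      * apply Hc; lra.
    + pose proof (pos_INR k); lra.
Qed.

Lemma P_cont k : forall x, INR k - 1 < x -> continuous (P k) x.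
Proof.
  induction k as [|k IH]; intros x Hx.
  - apply continuous_const.
  - apply (ex_derive_continuous (P (S k)) x). eexists. apply P_der_of_cont; auto.
    rewrite S_INR in Hx; lra.
Qed.

Lemma P_der k x : INR k < x -> is_derive (P (S k)) x (P k (x - 1) / x).
Proof. apply P_der_of_cont, P_cont. Qed.

Lemma F_der_of_cont k : (forall x, INR k - 1 < x -> continuous (F k) x) ->
  forall x, INR k < x -> is_derive (F (S k)) x (F k x / (x - INR k)).
Proof.
  intros Hc x Hx.
  change (F (S k)) with (fun u => RInt (fun t => F k t / (t - INR k)) (INR (S k)) u).
  first [apply (deriv_RInt (fun t => P k (t - 1) / t) (INR k)) | apply (deriv_RInt (fun t => F k t / (t - INR k)) (INR k))]; auto.
  - rewrite S_INR; lra.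
  - intros t Ht.
    apply (continuous_mult (F k) (fun t => / (t - INR k))).
    + apply Hc; lra.
    + apply (continuous_Rinv_comp (fun t => t - INR k)).
      * apply (continuous_minus (fun t => t) (fun _ => INR k)).
        apply continuous_id. apply continuous_const.
      * lra.
Qed.

Lemma F_cont k : forall x, INR k - 1 < x -> continuous (F k) x.
Proof.
  induction k as [|k IH]; intros x Hx.
  - apply continuous_const.
  - apply (ex_derive_continuous (F (S k)) x). eexists. apply F_der_of_cont; auto.
    rewrite S_INR in Hx; lra.
Qed.

Lemma F_der k x : INR k < x -> is_derive (F (S k)) x (F k x / (x - INR k)).
Proof. apply F_der_of_cont, F_cont. Qed.

Definition J (k m : nat) (x : R) :=
  P (k - m - 1) (x - INR m - 1) * F m x / (x - INR m).

Lemma J_cont k m x : (m < k)%nat -> INR k - 1 < x -> continuous (J k m) x.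
Proof.
  intros Hm Hx. unfold J.
  assert (Ek : INR k = INR (k - m - 1) + INR m + 1).
  { replace (INR k) with (INR ((k-m-1)+m+1)) by (f_equal; lia).
    rewrite !plus_INR; simpl; ring. }
  assert (Hm' : INR m + 1 <= INR k).
  { rewrite <- S_INR. apply le_INR; lia. }
  pose proof (pos_INR (k - m - 1)).
  apply (continuous_mult (fun x => P (k - m - 1) (x - INR m - 1) * F m x)
                         (fun x => / (x - INR m))).
  - apply (continuous_mult (fun x => P (k - m - 1) (x - INR m - 1)) (F m)).
    + apply (continuous_comp (fun x => x - INR m - 1) (P (k - m - 1))).
      * apply (continuous_minus (fun t => t - INR m) (fun _ => 1)).
        apply (continuous_minus (fun t => t) (fun _ => INR m)).
        apply continuous_id. apply continuous_const. apply continuous_const.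
      * apply P_cont. lra.
    + apply F_cont. lra.
  - apply (continuous_Rinv_comp (fun t => t - INR m)).
    + apply (continuous_minus (fun t => t) (fun _ => INR m)).
      apply continuous_id. apply continuous_const.
    + lra.
Qed.

Lemma J_int k m u : (m < k)%nat -> INR k <= u ->
  is_RInt (J k m) (INR k) u (RInt (J k m) (INR k) u).
Proof.
  intros Hm Hu. apply (RInt_correct (J k m)), ex_RInt_continuous.
  intros z Hz. rewrite Rmin_left in Hz by lra. apply J_cont; auto; lra.
Qed.

Lemma step k n u : (S n < k)%nat -> INR k <= u ->
  RInt (J k (S n)) (INR k) u =
  P (k - S n) (u - INR (S n)) * F (S n) u - RInt (J k n) (INR k) u.
Proof.
  intros Hn Hu.
  set (b := (k - S n - 1)%nat).
  assert (Eb : (k - S n)%nat = S b) by (unfold b; lia).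
  rewrite Eb.
  assert (Ek : INR k = INR (S b) + INR (S n)).
  { rewrite <- plus_INR. f_equal. unfold b; lia. }
  assert (Hb := pos_INR b).
  assert (HSn : INR (S n) = INR n + 1) by apply S_INR.
  assert (HSb : INR (S b) = INR b + 1) by apply S_INR.
  set (G := fun x => P (S b) (x - INR (S n)) * F (S n) x).
  assert (HG : is_RInt (fun x => J k (S n) x + J k n x) (INR k) u (minus (G u) (G (INR k)))).
  { apply (is_RInt_derive G (fun x => J k (S n) x + J k n x)).
    - intros x Hx. rewrite Rmin_left in Hx by lra.
      assert (D1 : is_derive (fun x => P (S b) (x - INR (S n))) x
                     (scal 1 (P b (x - INR (S n) - 1) / (x - INR (S n))))).
      { apply (is_derive_comp (P (S b)) (fun x => x - INR (S n))).
        - apply P_der. lra.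
        - auto_derive; auto; ring. }
      assert (D2 := F_der n x ltac:(lra)).
      assert (D := is_derive_mult _ _ x _ _ D1 D2 Rmult_comm).
      unfold G. eapply is_derive_ext; [intros t; reflexivity|].
      replace (J k (S n) x + J k n x) with
        (plus (mult (scal 1 (P b (x - INR (S n) - 1) / (x - INR (S n)))) (F (S n) x))
              (mult (P (S b) (x - INR (S n))) (F n x / (x - INR n)))).
      + exact D.
      + unfold J.
        replace (k - S n - 1)%nat with b by reflexivity.
        replace (k - n - 1)%nat with (S b) by (unfold b; lia).
        replace (x - INR n - 1) with (x - INR (S n)) by lra.
        assert (Hx1 : x - INR (S n) <> 0) by lra.
        assert (Hx2 : x - INR n <> 0) by lra.
        remember (P b (x - INR (S n) - 1)) as p1.
        remember (P (S b) (x - INR (S n))) as p2.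
        remember (F (S n) x) as f1. remember (F n x) as f0.
        remember (INR (S n)) as s1. remember (INR n) as s0.
        unfold scal, mult, plus; simpl. unfold mult; simpl.
        field. split; auto.
    - intros x Hx. rewrite Rmin_left, Rmax_right in Hx by lra.
      apply (continuous_plus (J k (S n)) (J k n)); apply J_cont; try lia; lra. }
  assert (H2 := is_RInt_minus _ _ _ _ _ _ HG (J_int k n u ltac:(lia) Hu)).
  assert (EG : G (INR k) = 0).
  { unfold G. replace (INR k - INR (S n)) with (INR (S b)) by lra.
    change (P (S b) (INR (S b))) with (RInt (fun t => P b (t - 1) / t) (INR (S b)) (INR (S b))).
    rewrite RInt_point. unfold zero; simpl. ring. }
  rewrite EG in H2.
  replace (P (S b) (u - INR (S n)) * F (S n) u - RInt (J k n) (INR k) u)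
    with (minus (minus (G u) 0) (RInt (J k n) (INR k) u))
    by (unfold minus, plus, opp, G; simpl; ring).
  apply is_RInt_unique.
  eapply is_RInt_ext; [|apply H2].
  intros x _. unfold minus, plus, opp; simpl. ring.
Qed.

Lemma sum_neg (g : nat -> R) n :
  sum_f_R0 (fun j => (-1) ^ (S n - j) * g j) n = - sum_f_R0 (fun j => (-1) ^ (n - j) * g j) n.
Proof.
  replace (- sum_f_R0 (fun j => (-1) ^ (n - j) * g j) n) with
    ((-1) * sum_f_R0 (fun j => (-1) ^ (n - j) * g j) n) by ring.
  rewrite scal_sum. apply sum_eq. intros i Hi.
  replace (S n - i)%nat with (S (n - i)) by lia. simpl. ring.
Qed.

Theorem theorem6 (k n : nat) (u : R) (Hnk : (n < k)%nat) (Hu : INR k <= u) :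
  RInt (fun x => P (k - n - 1) (x - INR n - 1) * F n x / (x - INR n)) (INR k) u
  = sum_f_R0 (fun j => (-1) ^ (n - j) * P (k - j) (u - INR j) * F j u) n.
Proof.
  change (fun x => P (k - n - 1) (x - INR n - 1) * F n x / (x - INR n)) with (J k n).
  induction n as [|n IH].
  - destruct k as [|k']; [lia|].
    cbn [sum_f_R0]. unfold J.
    replace (S k' - 0 - 1)%nat with k' by lia.
    replace (S k' - 0)%nat with (S k') by lia.
    change (INR 0) with 0. rewrite !Rminus_0_r.
    change (P (S k') u) with (RInt (fun t => P k' (t - 1) / t) (INR (S k')) u).
    simpl pow. rewrite Rmult_1_l. cbn [F]. rewrite Rmult_1_r.
    apply RInt_ext. intros x _. cbv beta. rewrite !Rminus_0_r, Rmult_1_r. reflexivity.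
  - rewrite step by (auto; lia).
    rewrite IH by lia.
    cbn [sum_f_R0].
    assert (E : forall m, sum_f_R0 (fun j => (-1) ^ (m - j) * P (k - j) (u - INR j) * F j u) n
                 = sum_f_R0 (fun j => (-1) ^ (m - j) * (P (k - j) (u - INR j) * F j u)) n).
    { intros m. apply sum_eq. intros; ring. }
    rewrite !E.
    rewrite (sum_neg (fun j => P (k - j) (u - INR j) * F j u)).
    rewrite Nat.sub_diag. simpl pow. match goal with |- ?a = ?b => change (@eq R a b) end; ring.
Qed.
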